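(* Let $W$ be a subset of a metric space $(X,d)$ with $\operatorname{den}(W)=\mathfrak c=2^{\aleph_0}$. Then there exists $\varepsilon_0>0$ such that for all $\varepsilon\in\,]0,\varepsilon_0[$, $$\hat{\mathcal N}^X_\varepsilon(W)=\hat{\mathcal N}_\varepsilon(W)=\hat{\mathcal M}_\varepsilon(W)=\mathcal M^*_\varepsilon(W)=\mathfrak c.$$
   Context: $\operatorname{den}(W)$ is the minimal cardinality of a dense subset of $W$. Closed balls: $B(c,r)=\{x:d(x,c)\le r\}$; $C$ is an $\varepsilon$-net for $W$ if $W\subseteq\bigcup_{c\in C}B(c,\varepsilon)$; $A$ is $\varepsilon$-distinguishable if $d(x,y)>\varepsilon$ for distinct $x,y\in A$. $\hat{\mathcal N}^A_\varepsilon(W)$ is the minimal cardinality of an $\varepsilon$-net $C\subseteq A$ for $W$; $\hat{\mathcal N}_\varepsilon(W):=\hat{\mathcal N}^W_\varepsilon(W)$; $\hat{\mathcal M}_\varepsilon(W)$ is the smallest cardinality of an $\varepsilon$-distinguishable $A\subseteq W$ that is maximal under inclusion among $\varepsilon$-distinguishable subsets of $W$; $\mathcal M^*_\varepsilon(W)$ is the smallest cardinal $\ge\operatorname{card}(A)$ for every $\varepsilon$-distinguishable $A\subseteq W$. *)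

(* Defs.v *)
From Stdlib Require Import Reals.
Open Scope R_scope.
Set Implicit Arguments.

Record MetricSpace := {
  mcarrier :> Type;
  mdist : mcarrier -> mcarrier -> R;
  mdist_eq0 : forall x y, mdist x y = 0 <-> x = y;
  mdist_sym : forall x y, mdist x y = mdist y x;
  mdist_tri : forall x y z, mdist x z <= mdist x y + mdist y z
}.

Definition card_le {T U : Type} (A : T -> Prop) (B : U -> Prop) : Prop :=
  exists Rel : T -> U -> Prop,
    (forall a, A a -> exists b, B b /\ Rel a b) /\
    (forall a a' b, A a -> A a' -> Rel a b -> Rel a' b -> a = a').

Definition card_eq {T U : Type} (A : T -> Prop) (B : U -> Prop) : Prop :=
  card_le A B /\ card_le B A.

(** The continuum c = 2^aleph_0, represented by the full set of nat -> bool. *)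
Definition continuum : (nat -> bool) -> Prop := fun _ => True.

Definition min_card_is {T U : Type} (P : (T -> Prop) -> Prop) (K : U -> Prop) : Prop :=
  (exists S, P S /\ card_eq S K) /\ (forall S, P S -> card_le K S).

(** "the smallest cardinal >= card S for every S satisfying P is card K":
    K is an upper bound, and no cardinal strictly below card K (represented by
    a subset L of nat -> bool with ~ card K <= card L) is an upper bound. *)
Definition sup_card_is {T : Type} (P : (T -> Prop) -> Prop)
    (K : (nat -> bool) -> Prop) : Prop :=
  (forall S, P S -> card_le S K) /\
  (forall L : (nat -> bool) -> Prop, ~ card_le K L ->
     exists S, P S /\ ~ card_le S L).

Section MetricNotions.
Context {X : MetricSpace}.

Definition subset (A B : X -> Prop) : Prop := forall x, A x -> B x.

Definition cball (c : X) (r : R) : X -> Prop := fun x => mdist X x c <= r.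

Definition dense_in (W D : X -> Prop) : Prop :=
  subset D W /\
  forall w, W w -> forall e, 0 < e -> exists x, D x /\ mdist X w x < e.

Definition is_net (A W : X -> Prop) (eps : R) (C : X -> Prop) : Prop :=
  subset C A /\ forall w, W w -> exists c, C c /\ cball c eps w.

Definition distinguishable (W : X -> Prop) (eps : R) (A : X -> Prop) : Prop :=
  subset A W /\ forall x y, A x -> A y -> x <> y -> mdist X x y > eps.

Definition maximal_distinguishable (W : X -> Prop) (eps : R) (A : X -> Prop) : Prop :=
  distinguishable W eps A /\
  forall B, distinguishable W eps B -> subset A B -> subset B A.

End MetricNotions.

(* Main.v *)
Require Import Defs.
From Stdlib Require Import Reals Lra Classical ClassicalEpsilon FunctionalExtensionality PropExtensionality Cantor Lia.
Open Scope R_scope.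

Lemma card_le_trans {T U V} (A:T->Prop) (B:U->Prop) (C:V->Prop) :
  card_le A B -> card_le B C -> card_le A C.
Proof.
  intros [R1 [H1 I1]] [R2 [H2 I2]].
  exists (fun a c => exists b, B b /\ R1 a b /\ R2 b c). split.
  - intros a Ha. destruct (H1 a Ha) as [b [Hb Rab]]. destruct (H2 b Hb) as [c [Hc Rbc]].
    exists c. split; [exact Hc|]. exists b; auto.
  - intros a a' c Ha Ha' [b [Hb [Rab Rbc]]] [b' [Hb' [Rab' Rbc']]].
    assert (b = b') by (apply (I2 b b' c); auto). subst b'.
    apply (I1 a a' b); auto.
Qed.

Definition enc (h : nat -> nat -> bool) : nat -> bool :=
  fun k => h (fst (Cantor.of_nat k)) (snd (Cantor.of_nat k)).

Lemma enc_inj h h' : enc h = enc h' -> h = h'.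
Proof.
  intros E. apply functional_extensionality; intro i.
  apply functional_extensionality; intro j.
  pose proof (f_equal (fun f => f (Cantor.to_nat (i, j))) E) as E'.
  unfold enc in E'. rewrite Cantor.cancel_of_to in E'. exact E'.
Qed.

Lemma koenig {T} (Dn : nat -> T -> Prop) :
  (forall n, ~ card_le continuum (Dn n)) ->
  ~ card_le continuum (fun x => exists n, Dn n x).
Proof.
  intros HD [Rel [Htot Hinj]].
  set (R' := fun h x => Rel (enc h) x).
  assert (Hinj' : forall h h' x, R' h x -> R' h' x -> h = h').
  { intros h h' x H1 H2. apply enc_inj. apply (Hinj _ _ x); unfold continuum; auto. }
  assert (Ha : forall n, exists a : nat -> bool, forall h, h n = a -> ~ exists x, Dn n x /\ R' h x).
  { intro n. apply NNPP. intro Hn.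
    apply (HD n).
    exists (fun a x => exists h, h n = a /\ R' h x /\ Dn n x). split.
    - intros a _. apply NNPP. intro Hc. apply Hn. exists a. intros h Hh [x [Hx Rx]].
      apply Hc. exists x. split; auto. exists h; auto.
    - intros a a' x _ _ [h [E1 [R1 _]]] [h' [E2 [R2 _]]].
      rewrite <- E1, <- E2. rewrite (Hinj' h h' x R1 R2). reflexivity. }
  set (H := fun n => proj1_sig (constructive_indefinite_description _ (Ha n))).
  destruct (Htot (enc H) I) as [x [[m Hm] Rx]].
  apply (proj2_sig (constructive_indefinite_description _ (Ha m)) H eq_refl).
  exists x. split; auto.
Qed.

Definition sub {T} (A B : T->Prop) := forall x, A x -> B x.

Lemma set_ext {T} (A B : T -> Prop) : sub A B -> sub B A -> A = B.
Proof.
  intros H1 H2. apply functional_extensionality; intro x.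
  apply propositional_extensionality; split; auto.
Qed.

Inductive tower {T} (f : (T->Prop)->(T->Prop)) : (T->Prop) -> Prop :=
| tw_f : forall A, tower f A -> tower f (f A)
| tw_u : forall F : (T->Prop)->Prop, (forall A, F A -> tower f A) ->
    tower f (fun x => exists A, F A /\ A x).

Definition extreme {T} (f : (T->Prop)->(T->Prop)) c :=
  forall A, tower f A -> sub A c -> ~ sub c A -> sub (f A) c.

Lemma tw_lemma1 {T} (f : (T->Prop)->(T->Prop)) (infl : forall A, sub A (f A)) c :
  extreme f c -> forall A, tower f A -> sub A c \/ sub (f c) A.
Proof.
  intros Ec A TA. induction TA as [A' TA' IH | F HF IH].
  - destruct IH as [H|H].
    + destruct (classic (sub c A')) as [H2|H2].
      * right. rewrite (set_ext c A' H2 H). intros x Hx; exact Hx.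
      * left. apply Ec; auto.
    + right. intros x Hx. apply infl. auto.
  - destruct (classic (exists A, F A /\ sub (f c) A)) as [[A [FA HA]]|Hn].
    + right. intros x Hx. exists A; auto.
    + left. intros x [A [FA Ax]]. destruct (IH A FA) as [H|H]; [auto|].
      exfalso; apply Hn; eauto.
Qed.

Lemma tw_lemma2 {T} (f : (T->Prop)->(T->Prop)) (infl : forall A, sub A (f A)) c :
  tower f c -> extreme f c.
Proof.
  intros Tc. induction Tc as [c' Tc' IH | F HF IH].
  - intros A TA HA Hn. destruct (tw_lemma1 f infl c' IH A TA) as [H|H].
    + destruct (classic (sub c' A)) as [H2|H2].
      * rewrite (set_ext A c' H H2). intros x Hx; exact Hx.
      * intros x Hx. apply infl. apply (IH A TA H H2). exact Hx.
    + exfalso; apply Hn; exact H.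
  - intros A TA HA Hn.
    destruct (classic (exists m, F m /\ sub A m)) as [[m [Fm Hm]]|Hno].
    + destruct (classic (sub m A)) as [H2|H2].
      * pose proof (set_ext A m Hm H2) as E. subst A.
        apply NNPP. intro Hc. apply Hn. intros x [m' [Fm' Hx]].
        destruct (tw_lemma1 f infl m (IH m Fm) m' (HF m' Fm')) as [H|H].
        -- auto.
        -- exfalso. apply Hc. intros y Hy. exists m'. auto.
      * intros x Hx. exists m. split; auto. apply (IH m Fm A TA Hm H2); auto.
    + exfalso. apply Hn. intros x [m [Fm mx]].
      destruct (tw_lemma1 f infl m (IH m Fm) A TA) as [H|H].
      * exfalso; apply Hno; eauto.
      * apply H. apply infl. exact mx.
Qed.

Lemma tw_chain {T} (f : (T->Prop)->(T->Prop)) (infl : forall A, sub A (f A)) A B :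
  tower f A -> tower f B -> sub A B \/ sub B A.
Proof.
  intros TA TB. destruct (tw_lemma1 f infl B (tw_lemma2 f infl B TB) A TA) as [H|H]; auto.
  right. intros x Hx. apply H, infl, Hx.
Qed.

Definition addable {X : MetricSpace} (W : X -> Prop) eps (A : X -> Prop) x :=
  ~ A x /\ distinguishable W eps (fun y => A y \/ y = x).

Definition fstep {X : MetricSpace} (W : X -> Prop) eps (A : X->Prop) : X -> Prop :=
  match excluded_middle_informative (exists x, addable W eps A x) with
  | left H => fun y => A y \/ y = proj1_sig (constructive_indefinite_description _ H)
  | right _ => A
  end.

Lemma fstep_infl {X : MetricSpace} (W : X -> Prop) eps A : sub A (fstep W eps A).
Proof.
  unfold fstep. destruct (excluded_middle_informative _); intros x Hx; auto.
Qed.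

Lemma tower_dist {X : MetricSpace} (W : X -> Prop) eps A :
  tower (fstep W eps) A -> distinguishable W eps A.
Proof.
  intros TA. induction TA as [A TA IH | F HF IH].
  - unfold fstep. destruct (excluded_middle_informative _) as [H|H]; auto.
    exact (proj2 (proj2_sig (constructive_indefinite_description _ H))).
  - split.
    + intros x [A [FA Ax]]. exact (proj1 (IH A FA) x Ax).
    + intros x y [A [FA Ax]] [B [FB By]] Hxy.
      destruct (tw_chain _ (fstep_infl W eps) A B (HF A FA) (HF B FB)) as [H|H].
      * apply (proj2 (IH B FB)); auto.
      * apply (proj2 (IH A FA)); auto.
Qed.

Lemma exists_maximal {X : MetricSpace} (W : X -> Prop) eps :
  exists M, maximal_distinguishable W eps M.
Proof.
  set (M := fun x => exists A, tower (fstep W eps) A /\ A x).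
  assert (TM : tower (fstep W eps) M) by (apply tw_u; auto).
  assert (Hfix : sub (fstep W eps M) M).
  { intros x Hx. exists (fstep W eps M). split; auto. apply tw_f; auto. }
  assert (Hno : ~ exists x, addable W eps M x).
  { intro Hex. unfold fstep in Hfix.
    destruct (excluded_middle_informative _) as [H|H]; [|contradiction].
    pose proof (proj2_sig (constructive_indefinite_description _ H)) as [Hn _].
    apply Hn. apply Hfix. right; reflexivity. }
  exists M. split.
  - apply tower_dist; auto.
  - intros B [HBW HBd] HMB x Bx. apply NNPP. intro Mx. apply Hno. exists x.
    split; auto. split.
    + intros y [My | ->]; [apply HBW, HMB; auto | apply HBW; auto].
    + intros y z Hy Hz. apply HBd.
      * destruct Hy as [Hy | ->]; auto.
      * destruct Hz as [Hz | ->]; auto.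
Qed.

Lemma dist_le_dense {X : MetricSpace} (W D S : X -> Prop) eps :
  0 < eps -> dense_in W D -> distinguishable W eps S -> card_le S D.
Proof.
  intros He [HDW HD] [HSW HS].
  exists (fun s d => D d /\ mdist X s d < eps/2). split.
  - intros s Hs. destruct (HD s (HSW s Hs) (eps/2)) as [d [Dd Hd]]; [lra|]. exists d; auto.
  - intros s s' d Hs Hs' [_ H1] [_ H2]. apply NNPP; intro Hne.
    pose proof (HS s s' Hs Hs' Hne) as H3.
    pose proof (mdist_tri X s d s') as H4. rewrite (mdist_sym X d s') in H4. lra.
Qed.

Lemma net_lower {X : MetricSpace} (W : X -> Prop) :
  (forall S, dense_in W S -> card_le continuum S) ->
  exists n:nat, forall C, is_net (fun _ => True) W (/ INR (S n)) C -> card_le continuum C.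
Proof.
  intros Hmin. apply NNPP. intro Hn.
  destruct (classic (exists w, W w)) as [[w0 Hw0]|Hemp].
  2:{ assert (Hd : dense_in W (fun _ => False)).
      { split. intros x []. intros w Hw; exfalso; apply Hemp; eauto. }
      destruct (Hmin _ Hd) as [R [Ht _]]. destruct (Ht (fun _ => false) I) as [b [[] _]]. }
  assert (HC : forall n, exists C, is_net (fun _ => True) W (/ INR (S n)) C /\ ~ card_le continuum C).
  { intro n. apply NNPP. intro H. apply Hn. exists n. intros C HCn. apply NNPP. intro H2. apply H. eauto. }
  set (C := fun n => proj1_sig (constructive_indefinite_description _ (HC n))).
  assert (HCs : forall n, is_net (fun _ => True) W (/ INR (S n)) (C n) /\ ~ card_le continuum (C n))
    by (intro n; exact (proj2_sig (constructive_indefinite_description _ (HC n)))).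
  set (pick := fun n c => epsilon (inhabits w0) (fun w => W w /\ mdist X w c <= / INR (S n))).
  set (Dn := fun n x => exists c, C n c /\ x = pick n c /\ W x /\ mdist X x c <= / INR (S n)).
  assert (HDn : forall n, ~ card_le continuum (Dn n)).
  { intros n H. apply (proj2 (HCs n)). apply (card_le_trans _ _ _ H).
    exists (fun x c => C n c /\ x = pick n c). split.
    - intros x [c [Cc [E _]]]. exists c; auto.
    - intros x x' c _ _ [_ E1] [_ E2]. congruence. }
  apply (koenig Dn HDn). apply Hmin. split.
  - intros x [n [c [_ [_ [Wx _]]]]]. exact Wx.
  - intros w Hw e He.
    destruct (archimed_cor1 (e/2)) as [N [HN N0]]; [lra|].
    destruct N as [|n]; [lia|].
    destruct (proj2 (proj1 (HCs n)) w Hw) as [c [Cc Hc]].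
    unfold cball in Hc.
    assert (Hp : W (pick n c) /\ mdist X (pick n c) c <= / INR (S n)).
    { apply epsilon_spec. exists w; auto. }
    exists (pick n c). split.
    + exists n, c. repeat split; tauto.
    + pose proof (mdist_tri X w c (pick n c)) as T.
      rewrite (mdist_sym X c (pick n c)) in T. lra.
Qed.

Theorem corollary2p11 (X : MetricSpace) (W : X -> Prop) :
  min_card_is (dense_in W) continuum ->
  exists eps0 : R, 0 < eps0 /\
    forall eps : R, 0 < eps < eps0 ->
      min_card_is (is_net (fun _ : X => True) W eps) continuum /\
      min_card_is (is_net W W eps) continuum /\
      min_card_is (maximal_distinguishable W eps) continuum /\
      sup_card_is (distinguishable W eps) continuum.
Proof.
  intros [[D0 [HD0 [HD0c HcD0]]] Hmin].
  destruct (net_lower W Hmin) as [n Hn].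
  exists (/ INR (S n)). split.
  { apply Rinv_0_lt_compat. apply lt_0_INR. lia. }
  intros eps [He He0].
  assert (LX : forall C, is_net (fun _ => True) W eps C -> card_le continuum C).
  { intros C [_ HC]. apply Hn. split. intros x _; exact I.
    intros w Hw. destruct (HC w Hw) as [c [Cc Hc]]. exists c. split; auto.
    unfold cball in *. lra. }
  assert (NetD0 : forall A, subset D0 A -> is_net A W eps D0).
  { intros A HA. split; auto. intros w Hw.
    destruct (proj2 HD0 w Hw eps He) as [d [Dd Hd]]. exists d. split; auto.
    unfold cball. lra. }
  assert (UB : forall S, distinguishable W eps S -> card_le S continuum).
  { intros S HS. apply (card_le_trans _ _ _ (dist_le_dense W D0 S eps He HD0 HS)). exact HD0c. }
  assert (MaxNet : forall M, maximal_distinguishable W eps M -> is_net (fun _ => True) W eps M).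
  { intros M [[HMW HMd] HMm]. split. intros x _; exact I.
    intros w Hw. apply NNPP. intro Hc.
    assert (Mw : M w).
    { apply (HMm (fun y => M y \/ y = w)).
      - split.
        + intros y [My | ->]; auto.
        + intros x y Hx Hy Hxy. destruct Hx as [Mx | ->]; destruct Hy as [My | ->].
          * apply HMd; auto.
          * apply Rnot_le_gt. intro Hle. apply Hc. exists x. split; auto.
            unfold cball. rewrite mdist_sym. exact Hle.
          * apply Rnot_le_gt. intro Hle. apply Hc. exists y. split; auto.
          * exfalso; apply Hxy; reflexivity.
      - intros y Hy; left; exact Hy.
      - right; reflexivity. }
    apply Hc. exists w. split; auto. unfold cball. rewrite (proj2 (mdist_eq0 X w w) eq_refl). lra. }
  destruct (exists_maximal W eps) as [M HM].
  assert (McE : card_eq M continuum) by (split; [apply UB, HM | apply LX, MaxNet, HM]).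
  split; [|split; [|split]].
  - split. exists D0. split; [apply NetD0; intros x _; exact I | split; auto]. exact LX.
  - split. exists D0. split; [apply NetD0, HD0 | split; auto].
    intros C [HCW HC]. apply LX. split; [intros x _; exact I | exact HC].
  - split. exists M. split; auto.
    intros A HA. apply LX, MaxNet, HA.
  - split. exact UB.
    intros L HL. exists M. split. apply HM. intro H. apply HL.
    exact (card_le_trans _ _ _ (proj2 McE) H).
Qed.
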